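(* Let $G$ and $H$ be nontrivial groups. Then $|\{x\in G*H: x^2\neq 1\}|=\max\{\aleph_0,|G|,|H|\}$. If moreover at least one of $G,H$ contains an involution, then also $|\{x\in G*H: x^2=1\}|=\max\{\aleph_0,|G|,|H|\}$.
   Context: An involution is an element of order $2$; $G*H$ is the free product. *)

(* Defs.v *)
Set Implicit Arguments.

Record group := Group {
  carrier :> Type;
  gmul : carrier -> carrier -> carrier;
  gone : carrier;
  ginv : carrier -> carrier;
  gmulA : forall x y z, gmul x (gmul y z) = gmul (gmul x y) z;
  gmul1l : forall x, gmul gone x = x;
  gmulVl : forall x, gmul (ginv x) x = gone
}.
Arguments gmul {g} _ _.
Arguments gone {g}.
Arguments ginv {g} _.

Record hom (G H : group) := Hom {
  hfun :> G -> H;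
  hfunM : forall x y, hfun (gmul x y) = gmul (hfun x) (hfun y)
}.

Definition is_free_product (G H P : group) (iG : hom G P) (iH : hom H P) : Prop :=
  forall (K : group) (f : hom G K) (g : hom H K),
    (exists h : hom P K, (forall x, h (iG x) = f x) /\ (forall y, h (iH y) = g y)) /\
    (forall h1 h2 : hom P K,
       (forall x, h1 (iG x) = f x) -> (forall y, h1 (iH y) = g y) ->
       (forall x, h2 (iG x) = f x) -> (forall y, h2 (iH y) = g y) ->
       forall p, h1 p = h2 p).

Definition nontrivial (G : group) : Prop := exists x : G, x <> gone.
Definition has_involution (G : group) : Prop :=
  exists x : G, x <> gone /\ gmul x x = gone.

Definition card_le (A B : Type) : Prop :=
  exists f : A -> B, forall a1 a2, f a1 = f a2 -> a1 = a2.

(* |A| = max{aleph_0, |B|, |C|}: each of aleph_0, |B|, |C| is <= |A|,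
   and |A| is <= one of them (the maximum of finitely many cardinals is one of them). *)
Definition card_eq_max_aleph0 (A B C : Type) : Prop :=
  card_le nat A /\ card_le B A /\ card_le C A /\
  (card_le A nat \/ card_le A B \/ card_le A C).

(* Main.v *)
Require Import Defs.
From Stdlib Require Import Classical ClassicalEpsilon FunctionalExtensionality ProofIrrelevance Lia List Arith.
From mathcomp Require ssreflect ssrfun ssrbool eqtype ssrnat seq choice boolp wochoice.
Import ListNotations.

Module ZornM.
Import ssreflect ssrfun ssrbool eqtype ssrnat seq choice boolp wochoice.
Lemma zornP (T : Type) (R : T -> T -> Prop) (S : T -> Prop) :
  (forall x, S x -> R x x) ->
  (forall x y z, S x -> S y -> S z -> R x y -> R y z -> R x z) ->
  (forall C : T -> Prop, (forall x, C x -> S x) ->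
     (forall x y, C x -> C y -> R x y \/ R y x) ->
     exists z, S z /\ forall x, C x -> R x z) ->
  exists z, S z /\ forall x, S x -> R z x -> R x z.
Proof.
move=> Rr Rt Ch.
pose T' := {classic T}.
pose R' : rel T' := fun x y => `[< R x y >].
pose S' : {pred T'} := fun x => `[< S x >].
have H1 : {in S', reflexive R'}.
  by move=> x /asboolP Sx; apply/asboolP; apply: Rr.
have H2 : {in S' & &, transitive R'}.
  move=> y x z /asboolP Sy /asboolP Sx /asboolP Sz /asboolP Hxy /asboolP Hyz.
  by apply/asboolP; apply: (Rt x y z).
have H3 : {in <= S', forall C, wo_chain R' C -> exists2 z, z \in S' & upper_bound R' C z}.
  move=> C sCS woC.
  have chC := wo_chainW woC.
  have HC1 : forall x, x \in C -> S x by move=> x /sCS /asboolP.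
  have HC2 : forall x y, x \in C -> y \in C -> R x y \/ R y x.
    move=> x y Cx Cy; have /orP[/asboolP|/asboolP] := chC x y Cx Cy; by [left|right].
  have [z [Sz ub]] := Ch (fun x => x \in C) HC1 HC2.
  by exists z; [apply/asboolP | move=> x Cx; apply/asboolP; apply: ub].
have [z Sz mz] := Zorn's_lemma H1 H2 H3.
exists z; split; first by apply/asboolP.
  move=> x Sx Rzx; have := mz x (introT (asboolP _) Sx).
  by move=> /(_ (introT (asboolP _) Rzx)) /asboolP.
Qed.
Lemma pair_inj : exists p : nat -> nat -> nat, forall a b c d, p a b = p c d -> a = c /\ b = d.
Proof.
exists (fun a b => choice.pickle (a, b)) => a b c d H.
have := f_equal (@choice.pickle_inv (nat * nat)%type) H. rewrite !choice.pickleK_inv. by case.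
Qed.
End ZornM.


Definition injf {A B} (f : A -> B) := forall x y, f x = f y -> x = y.
Definition em (P : Prop) := excluded_middle_informative P.

Lemma card_le_trans A B C : card_le A B -> card_le B C -> card_le A C.
Proof. intros [f Hf] [g Hg]; exists (fun a => g (f a)); auto. Qed.
Lemma card_le_refl A : card_le A A.
Proof. exists (fun a => a); auto. Qed.

Lemma card_cmp (X Y : Type) : card_le X Y \/ card_le Y X.
Proof.
unfold card_le.
destruct (classic (inhabited Y)) as [[y0]|nY].
2:{ right. exists (fun y => False_rect X (nY (inhabits y))). intros a; exfalso; exact (nY (inhabits a)). }
set (T := ((X -> Prop) * (X -> Y))%type).
set (S := fun c : T => forall x x', fst c x -> fst c x' -> snd c x = snd c x' -> x = x').
set (R := fun c d : T => (forall x, fst c x -> fst d x) /\ (forall x, fst c x -> snd c x = snd d x)).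
destruct (ZornM.zornP T R S) as [[D g] [SD Mx]].
- intros; split; auto.
- intros [D1 g1] [D2 g2] [D3 g3] _ _ _ [A1 B1] [A2 B2]; split; cbn in *.
  + intros x Hx; auto.
  + intros x Hx. rewrite B1 by auto. apply B2; auto.
- intros C CS Cch.
  set (Du := fun x => exists c, C c /\ fst c x).
  set (gu := fun x => match em (Du x) with left H => snd (proj1_sig (constructive_indefinite_description _ H)) x | right _ => y0 end).
  assert (Hg : forall c x, C c -> fst c x -> gu x = snd c x).
  { intros c x Cc Dx. unfold gu. destruct (em (Du x)) as [H|H].
    - destruct (constructive_indefinite_description _ H) as [c' [Cc' Dx']]. simpl.
      destruct (Cch c c' Cc Cc') as [[_ E]|[_ E]]; [symmetry|]; apply E; auto.
    - exfalso; apply H; exists c; auto. }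
  exists (Du, gu); split.
  + intros x x' [c [Cc Dx]] [c' [Cc' Dx']]; simpl.
    destruct (Cch c c' Cc Cc') as [[I E]|[I E]].
    * rewrite (Hg c' x), (Hg c' x') by auto. apply (CS c'); auto.
    * rewrite (Hg c x), (Hg c x') by auto. apply (CS c); auto.
  + intros c Cc; split; simpl; intros x Dx.
    * exists c; auto.
    * symmetry; apply Hg; auto.
- simpl in *.
  destruct (classic (forall x, D x)) as [AllD | nAll].
  + left; exists g; intros a1 a2 E; apply SD; simpl; auto.
  + destruct (classic (forall y, exists x, D x /\ g x = y)) as [Surj|nSurj].
    * right. exists (fun y => proj1_sig (constructive_indefinite_description _ (Surj y))).
      intros y y' E.
      destruct (constructive_indefinite_description _ (Surj y)) as [x [Dx Ex]].
      destruct (constructive_indefinite_description _ (Surj y')) as [x' [Dx' Ex']]. simpl in E. subst; reflexivity.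
    * exfalso. apply not_all_ex_not in nAll as [x0 nx0]. apply not_all_ex_not in nSurj as [y1 ny1].
      set (D' := fun x => D x \/ x = x0).
      set (g' := fun x => if em (x = x0) then y1 else g x).
      assert (SD' : S (D', g')).
      { intros x x' Dx Dx'; simpl; unfold g'.
        destruct (em (x = x0)); destruct (em (x' = x0)); intro E; try congruence.
        - destruct Dx' as [Dx'|Dx']; [|congruence]. exfalso; apply ny1; eauto.
        - destruct Dx as [Dx|Dx]; [|congruence]. exfalso; apply ny1; eauto.
        - destruct Dx as [Dx|Dx]; [|congruence]. destruct Dx' as [Dx'|Dx']; [|congruence]. auto. }
      assert (RR : R (D,g) (D',g')).
      { split; simpl; intros x Dx. left; auto. unfold g'. destruct (em (x = x0)); [subst; contradiction|auto]. }
      destruct (Mx _ SD' RR) as [I _]. apply nx0. apply (I x0). simpl. right; auto.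
Qed.

Lemma sig_eq_P (A : Type) (P : A -> Prop) (u v : {x | P x}) : proj1_sig u = proj1_sig v -> u = v.
Proof. destruct u, v; simpl; intros; subst; f_equal; apply proof_irrelevance. Qed.

Lemma hessenberg (A : Type) (e : nat -> A) : injf e ->
  exists p : A -> A -> A, forall a b c d, p a b = p c d -> a = c /\ b = d.
Proof.
intros einj.
destruct ZornM.pair_inj as [pn Hpn].
set (T := ((A -> Prop) * (A -> A -> A))%type).
set (S := fun c : T => (forall n, fst c (e n)) /\ (forall x y, fst c x -> fst c y -> fst c (snd c x y)) /\
   (forall x y x' y', fst c x -> fst c y -> fst c x' -> fst c y' -> snd c x y = snd c x' y' -> x = x' /\ y = y')).
set (R := fun c d : T => (forall x, fst c x -> fst d x) /\ (forall x y, fst c x -> fst c y -> snd c x y = snd d x y)).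
assert (Rr : forall x, S x -> R x x). { intros; split; auto. }
assert (Rt : forall x y z, S x -> S y -> S z -> R x y -> R y z -> R x z).
{ intros [D1 g1] [D2 g2] [D3 g3] _ _ _ [A1 B1] [A2 B2]; split; cbn in *.
  + intros x Hx; auto.
  + intros x y Hx Hy. rewrite B1 by auto. apply B2; auto. }
assert (Ch : forall C : T -> Prop, (forall x, C x -> S x) ->
     (forall x y, C x -> C y -> R x y \/ R y x) ->
     exists z, S z /\ forall x, C x -> R x z).
{ intros C CS Cch.
  destruct (classic (exists c, C c)) as [[c0 Cc0]|nC].
  2:{ set (B0 := fun x => exists n, e n = x).
      set (dec := fun x => match em (B0 x) with left H => proj1_sig (constructive_indefinite_description _ H) | right _ => 0 end).
      assert (Hdec : forall x, B0 x -> e (dec x) = x).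
      { intros x Hx. unfold dec. destruct (em (B0 x)) as [H|H]; [|contradiction].
        destruct (constructive_indefinite_description _ H); auto. }
      exists (B0, fun x y => e (pn (dec x) (dec y))). split.
      - split; [|split]; cbn.
        + intros n; exists n; auto.
        + intros x y _ _. eexists; reflexivity.
        + intros x y x' y' Hx Hy Hx' Hy' E. apply einj, Hpn in E as [E1 E2].
          rewrite <- (Hdec x), <- (Hdec x'), <- (Hdec y), <- (Hdec y') by auto. rewrite E1, E2; auto.
      - intros x Cx; exfalso; apply nC; eauto. }
  assert (up2 : forall c1 c2, C c1 -> C c2 -> exists c, C c /\ (forall x, fst c1 x -> fst c x) /\ (forall x, fst c2 x -> fst c x)).
  { intros c1 c2 C1 C2. destruct (Cch c1 c2 C1 C2) as [[I _]|[I _]].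
    - exists c2; auto. - exists c1; auto. }
  set (Bu := fun x => exists c, C c /\ fst c x).
  set (fu := fun x y => match em (exists c, C c /\ fst c x /\ fst c y) with
     left H => snd (proj1_sig (constructive_indefinite_description _ H)) x y | right _ => x end).
  assert (Hf : forall c x y, C c -> fst c x -> fst c y -> fu x y = snd c x y).
  { intros c x y Cc Hx Hy. unfold fu. destruct (em _) as [H|H].
    - destruct (constructive_indefinite_description _ H) as [c' [Cc' [Hx' Hy']]]. simpl.
      destruct (Cch c c' Cc Cc') as [[_ E]|[_ E]]; [symmetry|]; apply E; auto.
    - exfalso; apply H; exists c; auto. }
  exists (Bu, fu); split.
  - split; [|split]; cbn.
    + intros n. exists c0; split; auto. apply (CS c0 Cc0).
    + intros x y [c1 [C1 H1]] [c2 [C2 H2]].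
      destruct (up2 c1 c2 C1 C2) as [c [Cc [I1 I2]]].
      exists c; split; auto. rewrite (Hf c) by auto. apply (CS c Cc); auto.
    + intros x y x' y' [c1 [C1 H1]] [c2 [C2 H2]] [c3 [C3 H3]] [c4 [C4 H4]].
      destruct (up2 c1 c2 C1 C2) as [c5 [C5 [I1 I2]]].
      destruct (up2 c3 c4 C3 C4) as [c6 [C6 [I3 I4]]].
      destruct (up2 c5 c6 C5 C6) as [c [Cc [I5 I6]]].
      rewrite (Hf c), (Hf c) by auto. apply (CS c Cc); auto.
  - intros c Cc; split; cbn.
    + intros x Hx; exists c; auto.
    + intros x y Hx Hy; symmetry; apply Hf; auto. }
destruct (ZornM.zornP T R S Rr Rt Ch) as [[B f] [SB Mx]].
destruct SB as [Be [Bf Binj]]; cbn in Be, Bf, Binj.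
destruct (card_cmp {a | ~ B a} {a | B a}) as [[k kinj]|[h hinj]].
- set (j := fun a => match em (B a) with left _ => f a (e 0) | right H => f (proj1_sig (k (exist _ a H))) (e 1) end).
  assert (jB : forall a, B (j a)).
  { intros a; unfold j; destruct (em (B a)); apply Bf; auto. exact (proj2_sig (k _)). }
  assert (jinj : forall a a', j a = j a' -> a = a').
  { assert (kB : forall u, B (proj1_sig (k u))) by (intro u; exact (proj2_sig (k u))).
    intros a a'; unfold j; destruct (em (B a)) as [Ha|Ha]; destruct (em (B a')) as [Ha'|Ha']; intro E.
    - apply Binj in E as [E _]; auto.
    - apply Binj in E as [_ E]; auto. apply einj in E; discriminate.
    - apply Binj in E as [_ E]; auto. apply einj in E; discriminate.
    - apply Binj in E as [E _]; auto.
      apply sig_eq_P, kinj in E. apply (f_equal (@proj1_sig _ _)) in E. exact E. }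
  exists (fun x y => f (j x) (j y)). intros a b c d E.
  apply Binj in E as [E1 E2]; auto.
- exfalso.
  set (h' := fun b => match em (B b) with left H => proj1_sig (h (exist _ b H)) | right _ => b end).
  assert (hB : forall b, B b -> ~ B (h' b)).
  { intros b Hb; unfold h'; destruct (em (B b)); [|contradiction]. destruct (h _); auto. }
  assert (hinj' : forall b b', B b -> B b' -> h' b = h' b' -> b = b').
  { intros b b' Hb Hb'; unfold h'; destruct (em (B b)); [|contradiction]; destruct (em (B b')); [|contradiction].
    intro E. apply sig_eq_P, hinj in E. apply (f_equal (@proj1_sig _ _)) in E. exact E. }
  set (B' := fun a => B a \/ exists b, B b /\ h' b = a).
  set (hinv := fun a => match em (exists b, B b /\ h' b = a) with left H => proj1_sig (constructive_indefinite_description _ H) | right _ => a end).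
  assert (hinv_spec : forall a, (exists b, B b /\ h' b = a) -> B (hinv a) /\ h' (hinv a) = a).
  { intros a Ha. unfold hinv. destruct (em _) as [H|H]; [|contradiction].
    destruct (constructive_indefinite_description _ H); auto. }
  set (hat := fun x => if em (B x) then x else hinv x).
  assert (hatB : forall x, B' x -> B (hat x)).
  { intros x Hx; unfold hat; destruct (em (B x)); auto. destruct Hx as [Hx|Hx]; [contradiction|apply hinv_spec; auto]. }
  assert (hatR : forall x, B' x -> ~ B x -> h' (hat x) = x).
  { intros x [Hx|Hx] nB; [contradiction|]. unfold hat; destruct (em (B x)); [contradiction|]. apply hinv_spec; auto. }
  set (tag := fun x y => if em (B x) then 0 else if em (B y) then 1 else 2).
  set (f' := fun x y => if em (B x /\ B y) then f x y else h' (f (f (hat x) (hat y)) (e (tag x y)))).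
  assert (rec : forall x x', B' x -> B' x' -> (B x <-> B x') -> hat x = hat x' -> x = x').
  { intros x x' Hx Hx' Iff E. destruct (classic (B x)) as [Bx|nBx].
    - assert (Bx' : B x') by tauto. unfold hat in E. destruct (em (B x)); [|contradiction].
      destruct (em (B x')); [auto|contradiction].
    - assert (nBx' : ~ B x') by tauto. rewrite <- (hatR x), <- (hatR x'), E; auto. }
  assert (SB' : S (B', f')).
  { split; [|split]; cbn.
    - intros n; left; auto.
    - intros x y Hx Hy. unfold f'. destruct (em (B x /\ B y)) as [[Bx By]|nB].
      + left; auto.
      + right. eexists; split; [|reflexivity]. apply Bf; auto.
    - intros x y x' y' Hx Hy Hx' Hy'. unfold f'.
      destruct (em (B x /\ B y)) as [[Bx By]|nB]; destruct (em (B x' /\ B y')) as [[Bx' By']|nB'].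
      + apply Binj; auto.
      + intro E. exfalso. apply (hB (f (f (hat x') (hat y')) (e (tag x' y')))); [|rewrite <- E; auto].
        apply Bf; auto.
      + intro E. exfalso. apply (hB (f (f (hat x) (hat y)) (e (tag x y)))); [|rewrite E; auto].
        apply Bf; auto.
      + intro E. apply hinj' in E; try (apply Bf; auto).
        apply Binj in E as [E Et]; auto. apply Binj in E as [E1 E2]; auto. apply einj in Et.
        assert (I : (B x <-> B x') /\ (B y <-> B y')).
        { unfold tag in Et. destruct (em (B x)), (em (B y)), (em (B x')), (em (B y')); try discriminate; tauto. }
        split; apply rec; tauto. }
  assert (RR : R (B, f) (B', f')).
  { split; cbn.
    - intros x Hx; left; auto.
    - intros x y Hx Hy. unfold f'. destruct (em (B x /\ B y)); tauto. }
  destruct (Mx _ SB' RR) as [I _]; cbn in I.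
  apply (hB (e 0)); auto. apply I. right. exists (e 0); auto.
Qed.

Lemma list_le (A : Type) (e : nat -> A) : injf e -> card_le (list A) A.
Proof.
intros einj. destruct (hessenberg A e einj) as [p Hp].
set (enc := fix enc (l : list A) : A := match l with nil => e 0 | x :: l => p x (enc l) end).
exists (fun l => p (e (length l)) (enc l)).
intros l1 l2 E. apply Hp in E as [E1 E2]. apply einj in E1.
revert l2 E1 E2; induction l1 as [|x l1 IH]; intros [|y l2] E1 E2; simpl in *; try discriminate; auto.
apply Hp in E2 as [-> E2]. f_equal. apply IH; auto.
Qed.

Lemma map_injf A B (f : A -> B) : injf f -> injf (map f).
Proof.
intros fi l1; induction l1 as [|x l1 IH]; intros [|y l2] E; simpl in *; try discriminate; auto.
injection E; intros E2 E1. apply fi in E1; subst; f_equal; auto.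
Qed.

Lemma into_le (G H X : Type) : card_le nat X -> card_le G X -> card_le H X -> card_le (list (G + H)) X.
Proof.
intros [e einj] [gi gin] [hi hin].
destruct (hessenberg X e einj) as [p Hp].
set (s := fun z : G + H => match z with inl g => p (gi g) (e 0) | inr h => p (hi h) (e 1) end).
assert (sinj : injf s).
{ intros [a|a] [b|b] E; simpl in E; apply Hp in E as [E1 E2]; try (apply einj in E2; discriminate);
  f_equal; auto. }
apply card_le_trans with (list X).
- exists (map s); apply map_injf; auto.
- apply (list_le X e einj).
Qed.

Lemma list_bound (G H : Type) :
  card_le (list (G + H)) nat \/ card_le (list (G + H)) G \/ card_le (list (G + H)) H.
Proof.
destruct (card_cmp G H) as [GH|HG].
- destruct (card_cmp H nat) as [Hn|nH].
  + left; apply into_le; [apply card_le_refl | apply card_le_trans with H; auto | auto].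
  + right; right; apply into_le; [auto | auto | apply card_le_refl].
- destruct (card_cmp G nat) as [Gn|nG].
  + left; apply into_le; [apply card_le_refl | auto | apply card_le_trans with G; auto].
  + right; left; apply into_le; [auto | apply card_le_refl | auto].
Qed.

Section GL.
Variable G : group.
Lemma mulgV (x : G) : gmul x (ginv x) = gone.
Proof.
rewrite <- (gmul1l _ (gmul x (ginv x))).
rewrite <- (gmulVl _ (ginv x)) at 1.
rewrite <- gmulA. rewrite (gmulA _ (ginv x) x (ginv x)). rewrite gmulVl, gmul1l. apply gmulVl.
Qed.
Lemma mulg1 (x : G) : gmul x gone = x.
Proof. rewrite <- (gmulVl _ x), gmulA, mulgV, gmul1l. reflexivity. Qed.
Lemma inv_uniq (x y : G) : gmul y x = gone -> y = ginv x.
Proof. intro E. rewrite <- (mulg1 y), <- (mulgV x), gmulA, E, gmul1l. reflexivity. Qed.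
Lemma mul_cancel_l (a x y : G) : gmul a x = gmul a y -> x = y.
Proof. intro E. rewrite <- (gmul1l _ x), <- (gmul1l _ y), <- (gmulVl _ a), <- !gmulA, E. reflexivity. Qed.
Lemma inv_one_eq (x : G) : ginv x = gone -> x = gone.
Proof. intro E. pose proof (gmulVl _ x) as H. rewrite E, gmul1l in H. exact H. Qed.
Lemma conj_invol (q r T : G) : gmul r q = gone -> gmul T T = gone ->
  gmul (gmul q (gmul T r)) (gmul q (gmul T r)) = gone.
Proof.
intros E1 E2. assert (E3 : gmul q r = gone) by (rewrite (inv_uniq _ _ E1); apply mulgV).
rewrite <- !gmulA. rewrite (gmulA _ r q), E1, gmul1l. rewrite (gmulA _ T T), E2, gmul1l. exact E3.
Qed.
End GL.

Section HomL.
Variables G K : group.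
Variable h : hom G K.
Lemma hom_one : h gone = gone.
Proof. apply (mul_cancel_l _ (h gone)). rewrite <- hfunM, gmul1l, mulg1. reflexivity. Qed.
Lemma hom_inv (x : G) : h (ginv x) = ginv (h x).
Proof. apply inv_uniq. rewrite <- hfunM, gmulVl. apply hom_one. Qed.
End HomL.

Record perm (X : Type) := Perm { pf : X -> X; pb : X -> X;
  pfb : forall x, pf (pb x) = x; pbf : forall x, pb (pf x) = x }.
Arguments pf {X} _ _.
Arguments pb {X} _ _.

Lemma perm_ext X (p q : perm X) : (forall x, pf p x = pf q x) -> p = q.
Proof.
intros E. assert (Eb : forall x, pb p x = pb q x).
{ intros x. rewrite <- (pfb _ q x) at 1. rewrite <- E, pbf. reflexivity. }
destruct p as [f1 b1 fb1 bf1], q as [f2 b2 fb2 bf2]; simpl in *.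
assert (f1 = f2) by (apply functional_extensionality; auto).
assert (b1 = b2) by (apply functional_extensionality; auto). subst.
f_equal; apply proof_irrelevance.
Qed.

Section Sym.
Variable X : Type.
Definition pmul (p q : perm X) : perm X.
Proof.
refine (Perm _ (fun x => pf p (pf q x)) (fun x => pb q (pb p x)) _ _); intros x.
- rewrite pfb, pfb; reflexivity.
- rewrite pbf, pbf; reflexivity.
Defined.
Definition pone : perm X := Perm _ (fun x => x) (fun x => x) (fun x => eq_refl) (fun x => eq_refl).
Definition pinv (p : perm X) : perm X := Perm _ (pb p) (pf p) (pbf _ p) (pfb _ p).
Definition Sym : group.
Proof.
refine {| carrier := perm X; gmul := pmul; gone := pone; ginv := pinv |}.
- intros; apply perm_ext; reflexivity.
- intros; apply perm_ext; reflexivity.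
- intros; apply perm_ext; intros; simpl. apply pbf.
Defined.
End Sym.

Section Words.
Variables G H : group.
Definition L := (carrier G + carrier H)%type.

Definition actG (g : G) (w : list L) : list L :=
  match w with
  | inl g' :: w' => if em (gmul g g' = gone) then w' else inl (gmul g g') :: w'
  | _ => if em (g = gone) then w else inl g :: w
  end.
Definition actH (h : H) (w : list L) : list L :=
  match w with
  | inr h' :: w' => if em (gmul h h' = gone) then w' else inr (gmul h h') :: w'
  | _ => if em (h = gone) then w else inr h :: w
  end.
Definition nt (x : L) : Prop := match x with inl g => g <> gone | inr h => h <> gone end.
Definition diffside (x y : L) : Prop :=
  match x, y with inl _, inr _ => True | inr _, inl _ => True | _, _ => False end.
Fixpoint red (l : list L) : Prop :=
  match l with
  | nil => True
  | x :: l' => nt x /\ red l' /\ match l' with nil => True | y :: _ => diffside x y end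
  end.

Lemma red_actG g w : red w -> red (actG g w).
Proof.
destruct w as [|[g0|h0] w']; simpl; intros Hr.
- destruct (em (g = gone)); simpl; auto.
- destruct (em (gmul g g0 = gone)); simpl; tauto.
- destruct (em (g = gone)); simpl; tauto.
Qed.
Lemma red_actH h w : red w -> red (actH h w).
Proof.
destruct w as [|[g0|h0] w']; simpl; intros Hr.
- destruct (em (h = gone)); simpl; auto.
- destruct (em (h = gone)); simpl; tauto.
- destruct (em (gmul h h0 = gone)); simpl; tauto.
Qed.

Lemma actG_1 w : red w -> actG gone w = w.
Proof.
destruct w as [|[g0|h0] w']; simpl; intros Hr.
- destruct (em (@gone G = gone)); congruence.
- rewrite gmul1l. destruct (em (g0 = gone)); tauto.
- destruct (em (@gone G = gone)); congruence.
Qed.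
Lemma actH_1 w : red w -> actH gone w = w.
Proof.
destruct w as [|[g0|h0] w']; simpl; intros Hr.
- destruct (em (@gone H = gone)); congruence.
- destruct (em (@gone H = gone)); congruence.
- rewrite gmul1l. destruct (em (h0 = gone)); tauto.
Qed.

Lemma actG_comp g g' w : red w -> actG g (actG g' w) = actG (gmul g g') w.
Proof.
destruct w as [|[g0|h0] w']; simpl; intros Hr.
- destruct (em (g' = gone)) as [->|n]; simpl.
  + rewrite mulg1; reflexivity.
  + reflexivity.
- destruct (em (gmul g' g0 = gone)) as [E|n].
  + assert (E2 : gmul (gmul g g') g0 = g) by (rewrite <- gmulA, E, mulg1; reflexivity).
    rewrite E2. destruct w' as [|[x|y] w'']; simpl in *; tauto || reflexivity.
  + simpl. rewrite gmulA. reflexivity.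
- destruct (em (g' = gone)) as [->|n]; simpl.
  + rewrite mulg1; reflexivity.
  + reflexivity.
Qed.
Lemma actH_comp h h' w : red w -> actH h (actH h' w) = actH (gmul h h') w.
Proof.
destruct w as [|[g0|h0] w']; simpl; intros Hr.
- destruct (em (h' = gone)) as [->|n]; simpl.
  + rewrite mulg1; reflexivity.
  + reflexivity.
- destruct (em (h' = gone)) as [->|n]; simpl.
  + rewrite mulg1; reflexivity.
  + reflexivity.
- destruct (em (gmul h' h0 = gone)) as [E|n].
  + assert (E2 : gmul (gmul h h') h0 = h) by (rewrite <- gmulA, E, mulg1; reflexivity).
    rewrite E2. destruct w' as [|[x|y] w'']; simpl in *; tauto || reflexivity.
  + simpl. rewrite gmulA. reflexivity.
Qed.

Lemma actG_cons g r : red (inl g :: r) -> actG g r = inl g :: r.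
Proof.
destruct r as [|[a|b] r']; simpl; intros Hr.
- destruct (em (g = gone)); tauto.
- tauto.
- destruct (em (g = gone)); tauto.
Qed.
Lemma actH_cons h r : red (inr h :: r) -> actH h r = inr h :: r.
Proof.
destruct r as [|[a|b] r']; simpl; intros Hr.
- destruct (em (h = gone)); tauto.
- destruct (em (h = gone)); tauto.
- tauto.
Qed.

Definition X := {w : list L | red w}.
Definition liftG (g : G) (x : X) : X := exist _ (actG g (proj1_sig x)) (red_actG g _ (proj2_sig x)).
Definition liftH (h : H) (x : X) : X := exist _ (actH h (proj1_sig x)) (red_actH h _ (proj2_sig x)).

Definition permG (g : G) : perm X.
Proof.
refine (Perm _ (liftG g) (liftG (ginv g)) _ _); intros [w Hw]; apply sig_eq_P; simpl;
  rewrite actG_comp by (try apply red_actG; auto).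
- rewrite mulgV; apply actG_1; auto.
- rewrite gmulVl; apply actG_1; auto.
Defined.
Definition permH (h : H) : perm X.
Proof.
refine (Perm _ (liftH h) (liftH (ginv h)) _ _); intros [w Hw]; apply sig_eq_P; simpl;
  rewrite actH_comp by (try apply red_actH; auto).
- rewrite mulgV; apply actH_1; auto.
- rewrite gmulVl; apply actH_1; auto.
Defined.

Definition homG : hom G (Sym X).
Proof.
refine (Hom G (Sym X) permG _). intros g g'. apply perm_ext. intros [w Hw]; simpl.
apply sig_eq_P; simpl. symmetry; apply actG_comp; auto.
Defined.
Definition homH : hom H (Sym X).
Proof.
refine (Hom H (Sym X) permH _). intros g g'. apply perm_ext. intros [w Hw]; simpl.
apply sig_eq_P; simpl. symmetry; apply actH_comp; auto.
Defined.
End Words.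

Arguments nt {G H}. Arguments red {G H}. Arguments diffside {G H}.

Section Red.
Variables G H : group.
Definition linv (x : L G H) : L G H := match x with inl g => inl (ginv g) | inr h => inr (ginv h) end.
Definition invl (l : list (L G H)) := rev (map linv l).

Lemma red_app_l (l1 l2 : list (L G H)) : red (l1 ++ l2) -> red l1.
Proof.
induction l1 as [|x l1 IH]; simpl; auto. intros [A [B C]]; repeat split; auto.
destruct l1; simpl in *; auto.
Qed.
Lemma red_app_cons (l : list (L G H)) x r : red (l ++ [x]) -> red (x :: r) -> red (l ++ x :: r).
Proof.
induction l as [|y l IH]; simpl; auto. intros [A [B C]] D; repeat split; auto.
destruct l; simpl in *; auto.
Qed.
Lemma diffside_sym (x y : L G H) : diffside x y -> diffside y x.
Proof. destruct x, y; simpl; auto. Qed.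
Lemma red_rev_snoc (l : list (L G H)) x : red (x :: l) -> red (rev l ++ [x]).
Proof.
revert x; induction l as [|y l IH]; intros x Hr; simpl in *.
- tauto.
- rewrite <- app_assoc. simpl. apply red_app_cons.
  + apply IH; tauto.
  + simpl. destruct Hr as [A [[B [C D]] E]]. repeat split; auto. apply diffside_sym; auto.
Qed.
Lemma red_rev (l : list (L G H)) : red l -> red (rev l).
Proof. destruct l; simpl; auto. apply red_rev_snoc. Qed.
Lemma red_map_linv (l : list (L G H)) : red l -> red (map linv l).
Proof.
induction l as [|x l IH]; simpl; auto. intros [A [B C]]; repeat split; auto.
- destruct x; simpl in *; intro E; apply A; apply inv_one_eq; auto.
- destruct l as [|y l]; simpl; auto. destruct x, y; simpl in *; auto.
Qed.
Lemma red_conj (m : list (L G H)) (t : G) : ginv t = t -> red (m ++ [inl t]) -> red (m ++ inl t :: invl m).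
Proof.
intros Et Hm. apply red_app_cons; auto.
assert (H0 : red (invl (m ++ [inl t]))) by (apply red_rev, red_map_linv; auto).
unfold invl in H0; rewrite map_app, rev_app_distr in H0; simpl in H0; rewrite Et in H0; exact H0.
Qed.
Lemma length_invl (m : list (L G H)) : length (invl m) = length m.
Proof. unfold invl. rewrite length_rev, length_map. reflexivity. Qed.
End Red.
Arguments invl {G H}. Arguments linv {G H}.

Lemma app_inj_len A (l1 l2 r1 r2 : list A) : length l1 = length l2 -> l1 ++ r1 = l2 ++ r2 -> l1 = l2.
Proof.
revert l2; induction l1 as [|x l1 IH]; intros [|y l2] E1 E2; simpl in *; try discriminate; auto.
injection E2; intros; subst; f_equal; auto.
Qed.

Section FP.
Variables G H P : group.
Variable iG : hom G P.
Variable iH : hom H P.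

Definition iota (x : L G H) : P := match x with inl g => iG g | inr h => iH h end.
Fixpoint prodP (l : list (L G H)) : P := match l with nil => gone | x :: l => gmul (iota x) (prodP l) end.

Lemma prodP_app l1 l2 : prodP (l1 ++ l2) = gmul (prodP l1) (prodP l2).
Proof. induction l1 as [|x l1 IH]; simpl. rewrite gmul1l; auto. rewrite IH, gmulA; auto. Qed.

Lemma prodP_invl l : gmul (prodP (invl l)) (prodP l) = gone.
Proof.
induction l as [|x l IH]; simpl. apply gmul1l.
unfold invl in *. simpl. rewrite prodP_app. simpl. rewrite mulg1.
rewrite <- gmulA, (gmulA _ (iota (linv x))).
assert (E : gmul (iota (linv x)) (iota x) = gone).
{ destruct x; simpl; rewrite <- hfunM, gmulVl; apply hom_one. }
rewrite E, gmul1l. exact IH.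
Qed.

Section Phi.
Variable Phi : hom P (Sym (X G H)).
Hypothesis PhiG : forall g, Phi (iG g) = homG G H g.
Hypothesis PhiH : forall h, Phi (iH h) = homH G H h.

Definition eps : X G H := exist _ nil I.
Definition evl (p : P) : list (L G H) := proj1_sig (pf (Phi p) eps).

Lemma ev_gen l (w : X G H) : red (l ++ proj1_sig w) -> proj1_sig (pf (Phi (prodP l)) w) = l ++ proj1_sig w.
Proof.
induction l as [|x l IH]; intros Hr; simpl.
- rewrite hom_one. reflexivity.
- rewrite hfunM. simpl. assert (Hr' : red (l ++ proj1_sig w)) by (simpl in Hr; tauto).
  destruct x as [g|h]; simpl.
  + rewrite PhiG. simpl. rewrite IH by auto. apply actG_cons; auto.
  + rewrite PhiH. simpl. rewrite IH by auto. apply actH_cons; auto.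
Qed.
Lemma ev_prod l : red l -> evl (prodP l) = l.
Proof. intros Hr. unfold evl. rewrite ev_gen; simpl; rewrite app_nil_r; auto. Qed.
Lemma ev_one : evl gone = nil.
Proof. unfold evl. rewrite hom_one. reflexivity. Qed.

Lemma nonInv_inj (T : Type) (m : T -> list (L G H)) : injf m ->
  (forall t, red (m t ++ m t)) -> (forall t, m t <> nil) ->
  card_le T {x : P | gmul x x <> gone}.
Proof.
intros mi mr mn.
assert (Hsq : forall t, gmul (prodP (m t)) (prodP (m t)) <> gone).
{ intros t E. rewrite <- prodP_app in E. apply (f_equal evl) in E.
  rewrite ev_prod, ev_one in E by auto. apply (mn t). destruct (m t); simpl in *; congruence. }
exists (fun t => exist (fun y : P => gmul y y <> gone) (prodP (m t)) (Hsq t)).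
intros t t' E. apply (f_equal (@proj1_sig _ _)) in E; simpl in E.
apply (f_equal evl) in E. rewrite !ev_prod in E by (eapply red_app_l; eauto). auto.
Qed.

Lemma invol_inj (T : Type) (m : T -> list (L G H)) (t : G) : injf m -> gmul t t = gone ->
  (forall x, red (m x ++ [inl t])) -> card_le T {x : P | gmul x x = gone}.
Proof.
intros mi Htt mr.
assert (Et : ginv t = t) by (symmetry; apply inv_uniq; auto).
assert (Hsq : forall x, gmul (prodP (m x ++ inl t :: invl (m x))) (prodP (m x ++ inl t :: invl (m x))) = gone).
{ intros x. rewrite prodP_app. simpl. apply conj_invol.
  - apply prodP_invl.
  - rewrite <- hfunM, Htt. apply hom_one. }
exists (fun x => exist (fun y : P => gmul y y = gone) _ (Hsq x)).
intros x x' E. apply (f_equal (@proj1_sig _ _)) in E; simpl in E.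
apply (f_equal evl) in E. rewrite !ev_prod in E by (apply red_conj; auto).
apply mi. assert (El : length (m x) = length (m x')).
{ apply (f_equal (@length _)) in E. rewrite !length_app in E. simpl in E. rewrite !length_invl in E. lia. }
exact (app_inj_len _ _ _ _ _ El E).
Qed.
End Phi.
End FP.

Lemma fp_swap (G H P : group) (iG : hom G P) (iH : hom H P) :
  is_free_product iG iH -> is_free_product iH iG.
Proof.
intros F K f g. destruct (F K g f) as [[h [h1 h2]] U]. split.
- exists h; auto.
- intros k1 k2 A1 A2 B1 B2. apply U; auto.
Qed.

Section Main.
Variables G H P : group.
Variable iG : hom G P.
Variable iH : hom H P.
Hypothesis FP : is_free_product iG iH.

Lemma phi_exists : exists Phi : hom P (Sym (X G H)),
  (forall g, Phi (iG g) = homG G H g) /\ (forall h, Phi (iH h) = homH G H h).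
Proof. destruct (FP (Sym (X G H)) (homG G H) (homH G H)) as [[h [h1 h2]] _]. exists h; auto. Qed.

Definition SPc := {p : P | exists l, p = prodP G H P iG iH l}.
Lemma smul_ok (u v : SPc) : exists l, gmul (proj1_sig u) (proj1_sig v) = prodP G H P iG iH l.
Proof. destruct u as [p [l1 ->]], v as [q [l2 ->]]; simpl. exists (l1 ++ l2). rewrite prodP_app; auto. Qed.
Lemma sinv_ok (u : SPc) : exists l, ginv (proj1_sig u) = prodP G H P iG iH l.
Proof. destruct u as [p [l1 ->]]; simpl. exists (invl l1). symmetry; apply inv_uniq, prodP_invl. Qed.
Definition smul (u v : SPc) : SPc := exist _ _ (smul_ok u v).
Definition sinv (u : SPc) : SPc := exist _ _ (sinv_ok u).
Definition sone : SPc := exist _ gone (ex_intro _ nil eq_refl).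
Definition SPg : group.
Proof.
refine {| carrier := SPc; gmul := smul; gone := sone; ginv := sinv |}.
- intros; apply sig_eq_P; simpl; apply gmulA.
- intros; apply sig_eq_P; simpl; apply gmul1l.
- intros; apply sig_eq_P; simpl; apply gmulVl.
Defined.
Lemma fG_ok (g : G) : exists l, iG g = prodP G H P iG iH l.
Proof. exists [inl g]. simpl. rewrite mulg1; auto. Qed.
Lemma fH_ok (h : H) : exists l, iH h = prodP G H P iG iH l.
Proof. exists [inr h]. simpl. rewrite mulg1; auto. Qed.
Definition fG : hom G SPg.
Proof. refine (Hom G SPg (fun g => exist _ (iG g) (fG_ok g)) _). intros; apply sig_eq_P; simpl; apply hfunM. Defined.
Definition fH : hom H SPg.
Proof. refine (Hom H SPg (fun g => exist _ (iH g) (fH_ok g)) _). intros; apply sig_eq_P; simpl; apply hfunM. Defined.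

Lemma gen (p : P) : exists l, p = prodP G H P iG iH l.
Proof.
destruct (FP SPg fG fH) as [[Psi [Psi1 Psi2]] _].
set (c := Hom P P (fun p => proj1_sig (Psi p)) (fun x y => f_equal (@proj1_sig _ _) (hfunM Psi x y))).
set (idh := Hom P P (fun p => p) (fun x y => eq_refl)).
destruct (FP P iG iH) as [_ U].
assert (E : c p = idh p).
{ apply U; intros; simpl; auto.
  - rewrite Psi1; reflexivity.
  - rewrite Psi2; reflexivity. }
simpl in E. rewrite <- E. exact (proj2_sig (Psi p)).
Qed.

Lemma P_le : card_le P (list (L G H)).
Proof.
exists (fun p => proj1_sig (constructive_indefinite_description _ (gen p))).
intros p q E.
destruct (constructive_indefinite_description _ (gen p)) as [l1 E1].
destruct (constructive_indefinite_description _ (gen q)) as [l2 E2]. simpl in E; subst; auto.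
Qed.

Lemma upper (Q : P -> Prop) : card_le {x | Q x} nat \/ card_le {x | Q x} G \/ card_le {x | Q x} H.
Proof.
assert (S1 : card_le {x | Q x} (list (L G H))).
{ apply card_le_trans with P; [|apply P_le]. exists (@proj1_sig _ _). intros; apply sig_eq_P; auto. }
destruct (list_bound G H) as [A|[A|A]]; [left|right; left|right; right]; eapply card_le_trans; eauto.
Qed.

Section Fam.
Variable Phi : hom P (Sym (X G H)).
Hypothesis PhiG : forall g, Phi (iG g) = homG G H g.
Hypothesis PhiH : forall h, Phi (iH h) = homH G H h.
Variable a : G.
Variable b : H.
Hypothesis Ha : a <> gone.
Hypothesis Hb : b <> gone.

Fixpoint rab (k : nat) : list (L G H) := match k with 0 => nil | S k => inl a :: inr b :: rab k end.
Lemma rab_app k j : rab k ++ rab j = rab (k + j).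
Proof. induction k; simpl; auto. rewrite IHk; auto. Qed.
Lemma rab_len k : length (rab k) = 2 * k.
Proof. induction k; simpl; auto. rewrite IHk; lia. Qed.
Lemma rab_red k : red (rab k).
Proof. induction k; simpl; auto. repeat split; auto. destruct k; simpl; auto. Qed.
Lemma rab_red_t (t : G) : t <> gone -> forall k, red (rab k ++ [inl t]).
Proof. intros Ht k; induction k; simpl; auto. repeat split; auto. destruct k; simpl; auto. Qed.

Lemma nonInv_nat : card_le nat {x : P | gmul x x <> gone}.
Proof.
apply (nonInv_inj G H P iG iH Phi PhiG PhiH nat (fun n => rab (S n))).
- intros n m E. apply (f_equal (@length _)) in E. rewrite !rab_len in E. lia.
- intros n. rewrite rab_app. apply rab_red.
- intros n; simpl; discriminate.
Qed.

Lemma nonInv_G : card_le G {x : P | gmul x x <> gone}.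
Proof.
apply (nonInv_inj G H P iG iH Phi PhiG PhiH G
  (fun g => if em (g = gone) then [inl a; inr b] else [inl g; inr b; inl a; inr b])).
- intros g g' E; cbv beta in E. destruct (em (g = gone)), (em (g' = gone)); try discriminate; try congruence.
- intros g. destruct (em (g = gone)); simpl; tauto.
- intros g. destruct (em (g = gone)); discriminate.
Qed.

Variable t : G.
Hypothesis Ht : t <> gone.
Hypothesis Htt : gmul t t = gone.

Lemma inv_nat : card_le nat {x : P | gmul x x = gone}.
Proof.
apply (invol_inj G H P iG iH Phi PhiG PhiH nat rab t); auto.
- intros n m E. apply (f_equal (@length _)) in E. rewrite !rab_len in E. lia.
- intros n. apply rab_red_t; auto.
Qed.

Lemma inv_G : card_le G {x : P | gmul x x = gone}.
Proof.
apply (invol_inj G H P iG iH Phi PhiG PhiH G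
  (fun g => if em (g = gone) then [inr b] else [inl g; inr b]) t); auto.
- intros g g' E; cbv beta in E. destruct (em (g = gone)), (em (g' = gone)); try discriminate; try congruence.
- intros g. destruct (em (g = gone)); simpl; tauto.
Qed.

Lemma inv_H : card_le H {x : P | gmul x x = gone}.
Proof.
apply (invol_inj G H P iG iH Phi PhiG PhiH H
  (fun h => if em (h = gone) then [] else [inr h]) t); auto.
- intros g g' E; cbv beta in E. destruct (em (g = gone)), (em (g' = gone)); try discriminate; try congruence.
- intros g. destruct (em (g = gone)); simpl; tauto.
Qed.
End Fam.
End Main.

Theorem lemma20 (G H P : group) (iG : hom G P) (iH : hom H P) :
  is_free_product iG iH ->
  nontrivial G -> nontrivial H ->
  card_eq_max_aleph0 {x : P | gmul x x <> gone} G H /\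
  (has_involution G \/ has_involution H ->
   card_eq_max_aleph0 {x : P | gmul x x = gone} G H).
Proof.
intros F [a Ha] [b Hb].
pose proof (fp_swap _ _ _ _ _ F) as F'.
destruct (phi_exists _ _ _ _ _ F) as [Phi [PG PH]].
destruct (phi_exists _ _ _ _ _ F') as [Phi' [PG' PH']].
split.
- split; [|split; [|split]].
  + exact (nonInv_nat _ _ _ _ _ Phi PG PH a b Ha Hb).
  + exact (nonInv_G _ _ _ _ _ Phi PG PH a b Ha Hb).
  + exact (nonInv_G _ _ _ _ _ Phi' PG' PH' b a Hb Ha).
  + apply (upper _ _ _ _ _ F).
- intros [[t [Ht Htt]]|[t [Ht Htt]]]; (split; [|split; [|split]]); try apply (upper _ _ _ _ _ F).
  + exact (inv_nat _ _ _ _ _ Phi PG PH t b Ht Hb t Ht Htt).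
  + exact (inv_G _ _ _ _ _ Phi PG PH b Hb t Ht Htt).
  + exact (inv_H _ _ _ _ _ Phi PG PH t Ht Htt).
  + exact (inv_nat _ _ _ _ _ Phi' PG' PH' t a Ht Ha t Ht Htt).
  + exact (inv_H _ _ _ _ _ Phi' PG' PH' t Ht Htt).
  + exact (inv_G _ _ _ _ _ Phi' PG' PH' a Ha t Ht Htt).
Qed.
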